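(* For any local epistemic model $\mathcal{M}=(W,\delta,\{R_a\}_{a\in\mathbf{A}},\rho)$, its properization $\mathcal{M}^{pr}$ is a well-defined proper local epistemic model such that for every $w\in W$, $\mathcal{M},w$ and $\mathcal{M}^{pr},[w]_\delta$ are bisimilar (and hence $\mathcal{L}$-logically equivalent). In particular, if $\mathcal{M}$ is already a proper local epistemic model, then $\mathcal{M}$ is isomorphic to $\mathcal{M}^{pr}$.
   Context: Fix a nonempty finite set $\mathbf{A}$ of agents, a countable set $\mathbf{X}$ of variables disjoint from $\mathbf{A}$, and a countable set $\mathbf{P}$ of predicate letters. Formulas of $\mathcal{L}$: $\phi ::= p_x \mid \top \mid \neg\phi \mid (\phi\wedge\phi) \mid [x:=a]\phi \mid \mathsf{K}_X\alpha$ ($p\in\mathbf{P}$, $x\in\mathbf{X}$, $a\in\mathbf{A}$, $X\subseteq\mathbf{X}$ finite, $\alpha$ a formula without free variables), with $FV(p_x)=\{x\}$, $FV(\top)=\emptyset$, $FV$ of $\neg,\wedge$ as usual, $FV([x:=a]\phi)=FV(\phi)\setminus\{x\}$, $FV(\mathsf{K}_X\alpha)=X$; sentences are formulas without free variables. A first-order Kripke model is $\mathcal{M}=(W,\delta,\{R_a\}_{a\in\mathbf{A}},\rho)$ with $W\neq\emptyset$, $\delta:W\to\wp(\mathbf{A})\setminus\{\emptyset\}$, $R_a\subseteq W\times W$ with $R_a(w)=\emptyset$ if $a\notin\delta(w)$, and $\rho:\mathbf{P}\times W\to\wp(\mathbf{A})$ with $\rho(p,w)\subseteq\delta(w)$.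 Semantics with assignments $\sigma:\mathbf{X}\to\mathbf{A}$ admissible (i.e. $\sigma[FV(\phi)]\subseteq\delta(w)$): $\mathcal{M},w,\sigma\vDash p_x$ iff $\sigma(x)\in\rho(p,w)$; Booleans standard; $\mathcal{M},w,\sigma\vDash[x:=a]\phi$ iff ($a\in\delta(w)$ implies $\mathcal{M},w,\sigma[x\mapsto a]\vDash\phi$); $\mathcal{M},w,\sigma\vDash\mathsf{K}_X\alpha$ iff $\mathcal{M},v,\sigma\vDash\alpha$ for all $v\in\bigcap_{a\in\sigma[X]}R_a(w)$ (empty intersection $=W$). Pointed models are $\mathcal{L}$-logically equivalent if they satisfy the same sentences. A bisimulation between $\mathcal{M},\mathcal{N}$ is $Z\subseteq W^{\mathcal M}\times W^{\mathcal N}$ such that for $(w,v)\in Z$: $\delta^{\mathcal M}(w)=\delta^{\mathcal N}(v)$ and $\rho^{\mathcal M}(p,w)=\rho^{\mathcal N}(p,v)$ for all $p$; for all $A\subseteq\mathbf{A}$ and $w'\in\bigcap_{a\in A}R^{\mathcal M}_a(w)$ there is $v'\in\bigcap_{a\in A}R^{\mathcal N}_a(v)$ with $(w',v')\in Z$; and symmetrically. $\mathcal{M},w$ and $\mathcal{N},v$ are bisimilar if some bisimulation contains $(w,v)$. An isomorphism $\mathcal{M}\cong\mathcal{N}$ is a bijection $f:W^{\mathcal M}\to W^{\mathcal N}$ with $\delta^{\mathcal N}(f(w))=\delta^{\mathcal M}(w)$, $\rho^{\mathcal N}(p,f(w))=\rho^{\mathcal M}(p,w)$, and $wR^{\mathcal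 M}_a v\iff f(w)R^{\mathcal N}_a f(v)$. $\mathcal{M}$ is a local epistemic model if: (Local S5) for each $a$, the restriction of $R_a$ to $\{w\mid a\in\delta(w)\}$ is an equivalence relation; (Individually Increasing Domain) if $wR_av$ and $a\in\delta(w)$ then $a\in\delta(v)$; (Local Predicates) if $wR_av$ and $a\in\rho(p,w)$ then $a\in\rho(p,v)$; (Collectively Decreasing Domain) if $v\in\bigcap_{a\in\delta(w)}R_a(w)$ then $\delta(v)\subseteq\delta(w)$. It is proper if moreover $\bigcap_{a\in\delta(w)}R_a(w)=\{w\}$ for all $w$. For a local epistemic model, let $[w]_\delta=\bigcap_{a\in\delta(w)}R_a(w)$. The properization $\mathcal{M}^{pr}=(W^{pr},\delta^{pr},\{R^{pr}_a\},\rho^{pr})$ has $W^{pr}=\{[w]_\delta\mid w\in W\}$, $\delta^{pr}([w]_\delta)=\delta(w)$, $R^{pr}_a=\{([w]_\delta,[v]_\delta)\mid wR_av\}$, and $\rho^{pr}(p,[w]_\delta)=\rho(p,w)$. *)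

(* Defs.v *)
From mathcomp Require Import all_boot.
From Stdlib Require Import ClassicalEpsilon.

Set Implicit Arguments.
Unset Strict Implicit.
Unset Printing Implicit Defensive.

Record kstruct (A : finType) (P : Type) := KStruct {
  world : Type;
  kdom   : world -> {set A};
  krel   : A -> world -> world -> Prop;
  kval   : P -> world -> {set A}
}.

Arguments world {A P} k.
Arguments kdom {A P} k _.
Arguments krel {A P} k _ _ _.
Arguments kval {A P} k _ _.

Section Models.
Variables (A : finType) (P : Type).

Definition is_fo_model (M : kstruct A P) : Prop :=
  inhabited (world M) /\
  (forall w, kdom M w != set0) /\
  (forall a w v, a \notin kdom M w -> ~ krel M a w v) /\
  (forall p w, kval M p w \subset kdom M w).

Definition dcls (M : kstruct A P) (w : world M) : world M -> Prop :=
  fun v => forall a, a \in kdom M w -> krel M a w v.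

Definition local_S5 (M : kstruct A P) : Prop :=
  forall a : A,
    (forall w, a \in kdom M w -> krel M a w w) /\
    (forall w v, a \in kdom M w -> a \in kdom M v -> krel M a w v -> krel M a v w) /\
    (forall w v u, a \in kdom M w -> a \in kdom M v -> a \in kdom M u ->
        krel M a w v -> krel M a v u -> krel M a w u).

Definition indiv_increasing_domain (M : kstruct A P) : Prop :=
  forall a w v, krel M a w v -> a \in kdom M w -> a \in kdom M v.

Definition local_predicates (M : kstruct A P) : Prop :=
  forall a w v p, krel M a w v -> a \in kval M p w -> a \in kval M p v.

Definition coll_decreasing_domain (M : kstruct A P) : Prop :=
  forall w v, dcls (M:=M) w v -> kdom M v \subset kdom M w.

Definition local_epistemic (M : kstruct A P) : Prop :=
  is_fo_model M /\ local_S5 M /\ indiv_increasing_domain M /\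
  local_predicates M /\ coll_decreasing_domain M.

Definition proper_model (M : kstruct A P) : Prop :=
  local_epistemic M /\ (forall w v, dcls (M:=M) w v <-> v = w).

(* Bisimulation (intersections over arbitrary sets of agents; the empty
   intersection is the whole set of worlds). *)
Definition bisimulation (M N : kstruct A P) (Z : world M -> world N -> Prop) :=
  forall w v, Z w v ->
    kdom M w = kdom N v /\ (forall p, kval M p w = kval N p v) /\
    (forall (B : {set A}) w', (forall a, a \in B -> krel M a w w') ->
        exists v', (forall a, a \in B -> krel N a v v') /\ Z w' v') /\
    (forall (B : {set A}) v', (forall a, a \in B -> krel N a v v') ->
        exists w', (forall a, a \in B -> krel M a w w') /\ Z w' v').

Definition bisimilar (M N : kstruct A P) (w : world M) (v : world N) :=
  exists Z, bisimulation Z /\ Z w v.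

Definition isomorphic (M N : kstruct A P) : Prop :=
  exists f : world M -> world N, bijective f /\
    (forall w, kdom N (f w) = kdom M w) /\
    (forall p w, kval N p (f w) = kval M p w) /\
    (forall a w v, krel M a w v <-> krel N a (f w) (f v)).

Definition pr_world (M : kstruct A P) : Type :=
  {S : world M -> Prop | exists w, S = dcls (M:=M) w}.

Definition pr_cls (M : kstruct A P) (w : world M) : pr_world M :=
  exist _ (dcls (M:=M) w) (ex_intro _ w erefl).

Definition pr_rep (M : kstruct A P) (S : pr_world M) : world M :=
  proj1_sig (constructive_indefinite_description _ (proj2_sig S)).

Definition properization (M : kstruct A P) : kstruct A P :=
  @KStruct A P (pr_world M)
    (fun S => kdom M (pr_rep S))
    (fun a S T => exists w v, S = pr_cls w /\ T = pr_cls v /\ krel M a w v)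
    (fun p S => kval M p (pr_rep S)).

End Models.

Section Language.
Variables (A : finType) (P : Type) (V : eqType).

Inductive form : Type :=
  | FPred : P -> V -> form
  | FTop : form
  | FNeg : form -> form
  | FAnd : form -> form -> form
  | FAssign : V -> A -> form -> form
  | FK : seq V -> form -> form.  (* K_X alpha, X a finite set of variables *)

Fixpoint fv (f : form) : seq V :=
  match f with
  | FPred _ x => [:: x]
  | FTop => [::]
  | FNeg g => fv g
  | FAnd g h => fv g ++ fv h
  | FAssign x _ g => [seq y <- fv g | y != x]
  | FK X _ => X
  end.

Fixpoint wf (f : form) : bool :=
  match f with
  | FPred _ _ | FTop => true
  | FNeg g => wf g
  | FAnd g h => wf g && wf h
  | FAssign _ _ g => wf g
  | FK _ g => nilp (fv g) && wf g
  end.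

Definition sentence (f : form) : bool := wf f && nilp (fv f).

Definition upd (s : V -> A) (x : V) (a : A) : V -> A :=
  fun y => if y == x then a else s y.

Fixpoint sat (M : kstruct A P) (w : world M) (s : V -> A) (f : form) : Prop :=
  match f with
  | FPred p x => s x \in kval M p w
  | FTop => True
  | FNeg g => ~ sat w s g
  | FAnd g h => sat w s g /\ sat w s h
  | FAssign x a g => a \in kdom M w -> sat w (upd s x a) g
  | FK X g => forall v, (forall x, x \in X -> krel M (s x) w v) -> sat v s g
  end.

Definition sat_sentence (M : kstruct A P) (w : world M) (f : form) : Prop :=
  forall s, sat w s f.

Definition log_equiv (M N : kstruct A P) (w : world M) (v : world N) : Prop :=
  forall f, sentence f -> (sat_sentence w f <-> sat_sentence v f).

End Language.

(* Main.v *)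
Require Import Defs.
From mathcomp Require Import all_boot.
From Stdlib Require Import ClassicalEpsilon ProofIrrelevance FunctionalExtensionality PropExtensionality.

Set Implicit Arguments.
Unset Strict Implicit.

Lemma pr_eq (A : finType) (P : Type) (M : kstruct A P) (S T : pr_world M) :
  proj1_sig S = proj1_sig T -> S = T.
Proof.
destruct S as [S HS], T as [T HT]; simpl; intros E; subst T.
f_equal; apply proof_irrelevance.
Qed.

Lemma pr_cls_rep (A : finType) (P : Type) (M : kstruct A P) (S : pr_world M) :
  S = pr_cls (pr_rep S).
Proof.
apply pr_eq; simpl; unfold pr_rep.
destruct (constructive_indefinite_description _ _) as [w Hw]; exact Hw.
Qed.

Lemma pr_cls_inj (A : finType) (P : Type) (M : kstruct A P) (w v : world M) :
  pr_cls w = pr_cls v -> dcls (M:=M) w = dcls (M:=M) v.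
Proof. intros E; exact (f_equal (@proj1_sig _ _) E). Qed.

Lemma dcls_refl (A : finType) (P : Type) (M : kstruct A P) (w : world M) :
  local_epistemic M -> dcls (M:=M) w w.
Proof.
intros [_ [S5 _]] a Ha. exact (proj1 (S5 a) w Ha).
Qed.

Lemma rel_dom (A : finType) (P : Type) (M : kstruct A P) a w v :
  local_epistemic M -> krel M a w v -> a \in kdom M w.
Proof.
intros [[_ [_ [H _]]] _] R. destruct (boolP (a \in kdom M w)) as [h|h]; auto.
exfalso; exact (H a w v h R).
Qed.

Lemma wd (A : finType) (P : Type) (M : kstruct A P) (w w' : world M) :
  local_epistemic M -> dcls (M:=M) w = dcls (M:=M) w' ->
  kdom M w = kdom M w' /\ (forall p, kval M p w = kval M p w').
Proof.
intros HM E.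
have H1 : dcls (M:=M) w' w by rewrite -E; apply dcls_refl.
have H2 : dcls (M:=M) w w' by rewrite E; apply dcls_refl.
destruct HM as [[_ [_ [_ Hv]]] [S5 [Inc [LP CD]]]].
have ED : kdom M w = kdom M w'.
{ apply/eqP; rewrite eqEsubset; apply/andP; split; [exact (CD _ _ H1)|exact (CD _ _ H2)]. }
split; auto.
intros p; apply/setP => a; apply/idP/idP => Ha.
- apply: (LP a w w' p) => //. apply H2. apply: (subsetP (Hv p w)). done.
- apply: (LP a w' w p) => //. apply H1. apply: (subsetP (Hv p w')). done.
Qed.

Lemma pr_dom (A : finType) (P : Type) (M : kstruct A P) (w : world M) :
  local_epistemic M -> kdom (properization M) (pr_cls w) = kdom M w /\
       (forall p, kval (properization M) p (pr_cls w) = kval M p w).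
Proof.
intros HM. simpl. unfold pr_rep.
destruct (constructive_indefinite_description _ _) as [w' Hw]; simpl in *.
destruct (wd HM (esym Hw)) as [H1 H2]; split; auto.
Qed.

Lemma cls_rel (A : finType) (P : Type) (M : kstruct A P) a (w w1 v v1 : world M) :
  local_epistemic M ->
  dcls (M:=M) w = dcls (M:=M) w1 -> dcls (M:=M) v = dcls (M:=M) v1 ->
  krel M a w1 v1 -> krel M a w v.
Proof.
intros HM Ew Ev R.
destruct (wd HM Ew) as [Dw _]; destruct (wd HM Ev) as [Dv _].
have HM' := HM.
destruct HM' as [_ [S5 [Inc _]]].
destruct (S5 a) as [_ [Sym Tr]].
have a1 : a \in kdom M w1 by exact (rel_dom HM R).
have b1 : a \in kdom M v1 by exact (Inc _ _ _ R a1).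
have a0 : a \in kdom M w by rewrite Dw.
have b0 : a \in kdom M v by rewrite Dv.
have R1 : krel M a w w1.
{ have : dcls (M:=M) w w1 by rewrite Ew; apply dcls_refl. intros h; exact (h a a0). }
have R2 : krel M a v1 v.
{ have : dcls (M:=M) v1 v by rewrite -Ev; apply dcls_refl. intros h; exact (h a b1). }
apply (Tr w v1 v) => //. apply (Tr w w1 v1) => //.
Qed.

Lemma pr_rel (A : finType) (P : Type) (M : kstruct A P) a (w v : world M) :
  local_epistemic M ->
  krel (properization M) a (pr_cls w) (pr_cls v) -> krel M a w v.
Proof.
intros HM [w1 [v1 [E1 [E2 R]]]].
apply (cls_rel HM (pr_cls_inj E1) (pr_cls_inj E2) R).
Qed.

Lemma pr_proper (A : finType) (P : Type) (M : kstruct A P) (S T : pr_world M) :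
  local_epistemic M -> dcls (M:=properization M) S T <-> T = S.
Proof.
intros HM.
rewrite (pr_cls_rep S) (pr_cls_rep T).
set w := pr_rep S; set v := pr_rep T.
split.
- intros H.
  have Hd : dcls (M:=M) w v.
  { intros a Ha. apply (pr_rel HM). apply H. by rewrite (proj1 (pr_dom w HM)). }
  have HM' := HM.
  destruct HM' as [_ [S5 [Inc [_ CD]]]].
  have D1 := CD _ _ Hd.
  have D2 : kdom M w \subset kdom M v.
  { apply/subsetP => a Ha. exact (Inc a w v (Hd a Ha) Ha). }
  apply pr_eq; simpl.
  apply functional_extensionality => u; apply propositional_extensionality.
  split => Hu a Ha.
  + have Ha' : a \in kdom M v by apply (subsetP D2).
    destruct (S5 a) as [_ [Sym Tr]].
    apply (Tr w v u) => //. apply (Inc a v u) => //.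
    apply (Hu a Ha'). apply Hd => //.
    apply (Hu a Ha').
  + have Ha' : a \in kdom M w by apply (subsetP D1).
    destruct (S5 a) as [_ [Sym Tr]].
    apply (Tr v w u) => //. apply (Inc a w u) => //. apply Hu => //.
    apply Sym => //. apply Hd => //. apply Hu => //.
- intros E a Ha. rewrite E. exists w, w; split; [done|split;[done|]].
  rewrite (proj1 (pr_dom w HM)) in Ha. exact (@dcls_refl _ _ _ w HM a Ha).
Qed.

Lemma bisim_sat (A : finType) (P : Type) (V : eqType) (M N : kstruct A P)
  (Z : world M -> world N -> Prop) :
  bisimulation Z -> forall (f : form A P V) w v s, Z w v ->
  (sat w s f <-> sat v s f).
Proof.
intros HZ f; induction f as [p x| |g IH|g IHg h IHh|x a g IH|X g IH];
  intros w v s Hz; destruct (HZ w v Hz) as [Hd [Hp [Hf Hb]]]; simpl.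
- by rewrite Hp.
- tauto.
- rewrite (IH w v s Hz); tauto.
- rewrite (IHg w v s Hz) (IHh w v s Hz); tauto.
- rewrite Hd. split; intros H Ha; [rewrite -(IH w v _ Hz)|rewrite (IH w v _ Hz)]; auto.
- split.
  + intros H v' Hv'.
    destruct (Hb [set a | a \in map s X] v') as [w' [Hw' Hz']].
    { intros a Ha. rewrite inE in Ha; case/mapP: Ha => x Hx ->. by apply Hv'. }
    rewrite -(IH w' v' s Hz'). apply H. intros x Hx. apply Hw'. rewrite inE; apply/mapP. by exists x.
  + intros H w' Hw'.
    destruct (Hf [set a | a \in map s X] w') as [v' [Hv' Hz']].
    { intros a Ha. rewrite inE in Ha; case/mapP: Ha => x Hx ->. by apply Hw'. }
    rewrite (IH w' v' s Hz'). apply H. intros x Hx. apply Hv'. rewrite inE; apply/mapP. by exists x.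
Qed.

Lemma pr_bisim (A : finType) (P : Type) (M : kstruct A P) :
  local_epistemic M ->
  bisimulation (M:=M) (N:=properization M) (fun w S => S = pr_cls w).
Proof.
intros HM w S ->.
destruct (pr_dom w HM) as [D1 D2].
split; [by rewrite D1|split; [by intros p; rewrite D2|split]].
- intros B w' H. exists (pr_cls w'); split; auto.
  intros a Ha. exists w, w'; split; auto.
- intros B T H. exists (pr_rep T). split; [|apply pr_cls_rep].
  intros a Ha. apply (pr_rel HM). rewrite -pr_cls_rep. auto.
Qed.

Theorem proposition1 (A : finType) (P : countType) (V : countType)
    (M : kstruct A P) :
  0 < #|A| ->
  local_epistemic M ->
  (* the properization is well-defined: delta, rho do not depend on the representative *)
  (forall w w' : world M, dcls (M:=M) w = dcls (M:=M) w' ->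
       kdom M w = kdom M w' /\ (forall p, kval M p w = kval M p w')) /\
  (forall w : world M, kdom (properization M) (pr_cls w) = kdom M w /\
       (forall p, kval (properization M) p (pr_cls w) = kval M p w)) /\
  (* it is a proper_model local epistemic model *)
  proper_model (properization M) /\
  (* bisimilarity and logical equivalence *)
  (forall w : world M, bisimilar (M := M) (N := properization M) w (pr_cls w)) /\
  (forall w : world M,
       log_equiv V (M := M) (N := properization M) w (pr_cls w)) /\
  (proper_model M -> isomorphic M (properization M)).
Proof.
intros _ HM.
split; [intros w w'; apply wd; exact HM|].
split; [intros w; apply pr_dom; exact HM|].
split.
{ split; [|intros S T; apply pr_proper; exact HM].
  have HM' := HM.
  destruct HM' as [[[w0] [Hne [Hrel Hv]]] [S5 [Inc [LP CD]]]].
  split.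
  { split; [exact (inhabits (pr_cls w0))|split; [|split]].
    - intros S; simpl; apply Hne.
    - intros a S T Ha [w [v [E1 [E2 R]]]]. subst S.
      rewrite (proj1 (pr_dom w HM)) in Ha. exact (Hrel a w v Ha R).
    - intros p S; simpl; apply Hv. }
  split; [|split; [|split]].
  - intros a; split; [|split].
    + intros S Ha. exists (pr_rep S), (pr_rep S).
      split; [apply pr_cls_rep|split; [apply pr_cls_rep|]].
      apply (proj1 (S5 a)); exact Ha.
    + intros S T Ha Hb [w [v [E1 [E2 R]]]]; subst S T.
      rewrite (proj1 (pr_dom w HM)) in Ha. rewrite (proj1 (pr_dom v HM)) in Hb.
      exists v, w; split; auto; split; auto. by apply (proj1 (proj2 (S5 a))).
    + intros S T U Ha Hb Hc [w [v [E1 [E2 R]]]] [v' [u [E3 [E4 R']]]]; subst S U.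
      rewrite E3 in E2. subst T.
      exists w, u; split; auto; split; auto.
      rewrite (proj1 (pr_dom w HM)) in Ha. rewrite (proj1 (pr_dom v' HM)) in Hb.
      rewrite (proj1 (pr_dom u HM)) in Hc.
      have R2 := cls_rel HM (esym (pr_cls_inj E2)) (erefl _) R'.
      apply (proj2 (proj2 (S5 a)) w v u) => //.
      * apply (Inc a w v R). exact (rel_dom HM R).
  - intros a S T [w [v [E1 [E2 R]]]] Ha; subst S T.
    rewrite (proj1 (pr_dom v HM)). apply (Inc a w v R). exact (rel_dom HM R).
  - intros a S T p [w [v [E1 [E2 R]]]] Ha; subst S T.
    rewrite (proj2 (pr_dom v HM)). rewrite (proj2 (pr_dom w HM)) in Ha.
    exact (LP a w v p R Ha).
  - intros S T H. rewrite (proj1 (pr_proper S T HM) H). apply subxx. }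
split; [intros w; exists (fun w S => S = pr_cls w); split; [apply pr_bisim; exact HM|done]|].
split.
{ intros w f _. split; intros H s.
  - rewrite -(bisim_sat (pr_bisim HM) f s (erefl (pr_cls w))). apply H.
  - rewrite (bisim_sat (pr_bisim HM) f s (erefl (pr_cls w))). apply H. }
intros [_ Hp].
exists (@pr_cls _ _ M). split.
{ exists (@pr_rep _ _ M).
  - intros w. unfold pr_rep.
    destruct (constructive_indefinite_description _ _) as [w' Hw']; simpl in *.
    apply Hp. rewrite Hw'. apply dcls_refl; exact HM.
  - intros S. symmetry; apply pr_cls_rep. }
split; [intros w; apply (pr_dom w HM)|].
split; [intros p w; apply (pr_dom w HM)|].
intros a w v; split.
- intros R; exists w, v; auto.
- apply pr_rel; exact HM.
Qed.
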